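(* For every $n\ge1$ there is an injective map from $\bar{Q}_1(0,n)$ to $\bar{P}_1(0,n)$.
   Context: Partitions: $\lambda_1\ge\cdots\ge\lambda_\ell>0$, $\ell(\lambda)=\ell$, $\lambda_i=0$ for $i>\ell$, $s(\lambda)$ the smallest part with $s(\emptyset)=+\infty$. Rank $=\lambda_1-\ell$. Durfee symbol $(\alpha,\beta)_j$ of $\lambda$: $j$ is the largest integer with $\lambda_j\ge j$ (side of the Durfee square), $\alpha$ is the conjugate of $(\lambda_1-j,\dots,\lambda_j-j)$ (columns right of the square), $\beta=(\lambda_{j+1},\lambda_{j+2},\dots)$ (rows below); $|\lambda|=|\alpha|+|\beta|+j^2$. $\bar{Q}_1(0,n)$ is the set of partitions of $n$ whose Durfee symbol $(\alpha,\beta)_j$ satisfies $j\ge1$, $\beta_1=j$, $\ell(\beta)-\ell(\alpha)\ge1$, $\alpha_1=\alpha_2=j>\alpha_3$ and $s(\beta)\ge3$. $\bar{P}_1(0,n)$ is the set of partitions of $n$ with rank $\ge0$ whose Durfee symbol $(\gamma,\delta)_{j'}$ satisfies $j'\ge1$, $\ell(\gamma)=\ell(\delta)$, $\gamma_1\le j'-3$, $\delta_1=j'$ and $s(\delta)\ge2$. *)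

(* Defs.v *)
(* Partitions are represented as seq nat listing the
   parts in nonincreasing order; parts are 1-indexed in the paper, so
   lambda_i = nth 0 l i.-1 (and lambda_i = 0 for i > size l). *)
From mathcomp Require Import all_boot.
Set Implicit Arguments. Unset Strict Implicit. Unset Printing Implicit Defensive.

Definition is_partition (n : nat) (l : seq nat) : bool :=
  [&& sorted geq l, all (fun x => 0 < x) l & sumn l == n].

Definition part (l : seq nat) (i : nat) : nat := nth 0 l i.-1.

Definition durfee (l : seq nat) : nat :=
  foldr maxn 0 [seq j <- iota 0 (size l).+1 | j <= part l j].

(* conjugate of a (weakly decreasing) sequence: k-th part (1-indexed) is
   the number of entries >= k *)
Definition conj_part (s : seq nat) : seq nat :=
  mkseq (fun k => count (fun x => k < x) s) (foldr maxn 0 s).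

Definition dalpha (l : seq nat) : seq nat :=
  conj_part [seq part l i - durfee l | i <- iota 1 (durfee l)].
Definition dbeta (l : seq nat) : seq nat := drop (durfee l) l.

(* s(mu) >= k, with the convention s(emptyset) = +infinity *)
Definition smallest_ge (mu : seq nat) (k : nat) : bool := all (fun x => k <= x) mu.

(* rank >= 0, i.e. lambda_1 - ell >= 0 *)
Definition rank_nonneg (l : seq nat) : bool := size l <= part l 1.

Definition Qbar1 (n : nat) : pred (seq nat) := fun l =>
  let j := durfee l in let a := dalpha l in let b := dbeta l in
  [&& is_partition n l, 1 <= j, part b 1 == j,
      size a + 1 <= size b,
      part a 1 == j, part a 2 == j, part a 3 < j
    & smallest_ge b 3].

Definition Pbar1 (n : nat) : pred (seq nat) := fun l =>
  let j := durfee l in let g := dalpha l in let d := dbeta l in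
  [&& is_partition n l, rank_nonneg l, 1 <= j,
      size g == size d,
      (part g 1 + 3 <= j)%N (* gamma_1 <= j' - 3 over the integers *),
      part d 1 == j
    & smallest_ge d 2].

(* Main.v *)
Require Import Defs.
From mathcomp Require Import all_boot zify.
Set Implicit Arguments. Unset Strict Implicit. Unset Printing Implicit Defensive.

Lemma geq_trans : transitive geq.
Proof. move=> y x z /= H1 H2; exact: leq_trans H2 H1. Qed.
Lemma geq_refl : reflexive geq.
Proof. by move=> x /=. Qed.
Lemma geq_anti : antisymmetric geq.
Proof. move=> x y /andP [H1 H2] /=; lia. Qed.

Lemma part_mono l i i' : sorted geq l -> i <= i' -> part l i' <= part l i.
Proof.
move=> Hs Hii; rewrite /part.
case: (ltnP i'.-1 (size l)) => Hi'; last by rewrite nth_default.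
have Hi : i.-1 < size l by apply: leq_ltn_trans Hi'; lia.
have := @sorted_leq_nth _ geq geq_trans geq_refl 0 l Hs i.-1 i'.-1 Hi Hi'.
by apply; lia.
Qed.

Lemma foldr_max_le s k : all (fun x => x <= k) s -> foldr maxn 0 s <= k.
Proof. elim: s => //= x s IH /andP [H1 H2]; by rewrite geq_max H1 IH. Qed.

Lemma foldr_max_ge s x : x \in s -> x <= foldr maxn 0 s.
Proof.
elim: s => //= y s IH; rewrite in_cons => /orP [/eqP -> | H].
  by rewrite leq_max leqnn.
by rewrite leq_max IH // orbT.
Qed.

Lemma durfee_eq l k : sorted geq l -> k <= part l k -> part l k.+1 <= k -> durfee l = k.
Proof.
move=> Hs H1 H2; rewrite /durfee; apply/eqP; rewrite eqn_leq; apply/andP; split.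
  apply: foldr_max_le; apply/allP => i; rewrite mem_filter => /andP [Hi _].
  case: (leqP i k) => // Hki.
  have := part_mono Hs Hki; lia.
apply: foldr_max_ge; rewrite mem_filter H1 mem_iota /=.
case: k H1 H2 => // k H1 _.
rewrite /part /= in H1; case: (ltnP k (size l)) => Hk; first by lia.
by rewrite nth_default in H1.
Qed.

Lemma sumn_mapD (T : Type) (f g : T -> nat) r :
  sumn [seq f t + g t | t <- r] = sumn (map f r) + sumn (map g r).
Proof. elim: r => //= t r ->; lia. Qed.

Lemma sumn_map0 (T : Type) (r : seq T) : sumn [seq 0 | _ <- r] = 0.
Proof. by elim: r. Qed.

Lemma sum_ltb a n x : sumn [seq nat_of_bool (t < x) | t <- iota a n] = minn (x - a) n.
Proof.
elim: n a => [|n IH] a /=; first by rewrite minn0.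
rewrite IH; case: (ltnP a x) => H; lia.
Qed.

Lemma sum_count a n s :
  sumn [seq count (fun x => t < x) s | t <- iota a n] = sumn [seq minn (x - a) n | x <- s].
Proof.
elim: s => [|x s IH] /=; first exact: sumn_map0.
by rewrite sumn_mapD IH sum_ltb addnC.
Qed.

Lemma sumn_sub a s : all (fun x => a <= x) s -> sumn [seq x - a | x <- s] + a * size s = sumn s.
Proof. elim: s => //= [|x s IH /andP [H1 H2]]; [by rewrite muln0 | rewrite -(IH H2); lia]. Qed.

Lemma sorted_cat_geq c s1 s2 : sorted geq s1 -> sorted geq s2 ->
  all (fun x => c <= x) s1 -> all (fun x => x <= c) s2 -> sorted geq (s1 ++ s2).
Proof.
move=> H1 H2 H3 H4; rewrite sorted_pairwise; last exact: geq_trans.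
rewrite pairwise_cat -!sorted_pairwise ?H1 ?H2 ?andbT; try exact: geq_trans.
apply/allrelP => x y Hx Hy /=.
by apply: (@leq_trans c); [exact: (allP H4) | exact: (allP H3)].
Qed.

Lemma sorted_count_eq s1 s2 : sorted geq s1 -> sorted geq s2 -> size s1 = size s2 ->
  (forall t, count (fun x => t < x) s1 = count (fun x => t < x) s2) -> s1 = s2.
Proof.
move=> H1 H2 Hsz Hc; apply: (sorted_eq geq_trans geq_anti) => //.
apply/allP => x _; apply/eqP.
have E : forall s, count (pred1 x) s = (if x is x'.+1 then count (fun y => x' < y) s else size s)
                   - count (fun y => x < y) s.
  move=> s; elim: s => [|y s IH] /=; first by case: x.
  case: x IH => [|x] /= IH.
    have := count_size (fun y => 0 < y) s; case: y => /= [|y]; lia.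
  have Hle : count (fun y => x.+1 < y) s <= count (fun y => x < y) s.
    by apply: sub_count => z /=; lia.
  case: (ltngtP x.+1 y) => Hy /=; try lia.
rewrite !E; move: E; case: x => [|x] _; by rewrite ?Hsz !Hc.
Qed.

Definition mkS j B := [seq j.+1 + count (fun x => t < x) B | t <- iota 3 (j - 3)].
Definition mkD m g := [seq 2 + count (fun x => t < x) g | t <- iota 0 (m - 2)].
Definition mk (j m : nat) (g B : seq nat) : seq nat :=
  (j + m) :: mkS j B ++ nseq 4 j.+1 ++ mkD m g.

Lemma sumn_const (T : Type) c (r : seq T) : sumn [seq c | _ <- r] = size r * c.
Proof. by elim: r => //= _ r ->; rewrite mulSn. Qed.

Section MK.
Variables (j m : nat) (g B : seq nat).
Hypotheses (Hj : 3 <= j) (Hm : 3 <= m) (Hg : size g = j.-1)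
  (Hgb : all (fun x => x <= m - 3) g) (HB : size B = m.-1)
  (HBb : all (fun x => 3 <= x <= j) B).

Lemma size_mk : size (mk j m g B) = j + m.
Proof. rewrite /mk /mkS /mkD /= !size_cat /= !size_map !size_iota; lia. Qed.

Lemma nth_mk_mid i : j - 2 <= i <= j + 1 -> nth 0 (mk j m g B) i = j.+1.
Proof.
move=> Hi; rewrite /mk; case: i Hi => [|i] Hi; first lia.
change (nth 0 (mkS j B ++ nseq 4 j.+1 ++ mkD m g) i = j.+1).
rewrite nth_cat /mkS size_map size_iota ifF; last lia.
rewrite nth_cat size_nseq ifT; last lia.
by rewrite nth_nseq ifT //; lia.
Qed.

Lemma S_bounds x : x \in mkS j B -> j.+1 <= x <= j + m.
Proof.
case/mapP => t _ ->; have := count_size (fun x => t < x) B; lia.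
Qed.

Lemma D_bounds x : x \in mkD m g -> 2 <= x <= j.+1.
Proof.
case/mapP => t _ ->; have := count_size (fun x => t < x) g; lia.
Qed.

Lemma cnt_anti (s : seq nat) x y : x <= y -> count (fun z => y < z) s <= count (fun z => x < z) s.
Proof. by move=> H; apply: sub_count => z /=; lia. Qed.

Lemma sorted_mk : sorted geq (mk j m g B).
Proof.
change (path geq (j+m) (mkS j B ++ nseq 4 j.+1 ++ mkD m g)).
rewrite path_sortedE; last exact: geq_trans.
apply/andP; split.
  apply/allP => x; rewrite !mem_cat => /or3P [/S_bounds|/nseqP [-> _]|/D_bounds] /=; lia.
apply: (@sorted_cat_geq j.+1).
- apply: (homo_sorted (e := leq)); last exact: iota_sorted.
  by move=> x y H /=; rewrite leq_add2l cnt_anti.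
- apply: (@sorted_cat_geq j.+1).
  + by rewrite /= !leqnn.
  + apply: (homo_sorted (e := leq)); last exact: iota_sorted.
    by move=> x y H /=; rewrite leq_add2l cnt_anti.
  + by apply/allP => x /nseqP [-> _].
  + by apply/allP => x /D_bounds /andP [].
- by apply/allP => x /S_bounds /andP [].
- by apply/allP => x; rewrite mem_cat => /orP [/nseqP [-> _]|/D_bounds /andP []].
Qed.

Lemma all_mk : all (fun x => 2 <= x) (mk j m g B).
Proof.
change ((2 <= j + m) && all (fun x => 2 <= x) (mkS j B ++ nseq 4 j.+1 ++ mkD m g)).
apply/andP; split; first lia.
by apply/allP => x; rewrite !mem_cat => /or3P [/S_bounds|/nseqP [-> _]|/D_bounds] /=; lia.
Qed.

Lemma sum_mk : sumn (mk j m g B) = j * j + 3 * j + sumn g + sumn B.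
Proof.
change ((j + m) + sumn (mkS j B ++ nseq 4 j.+1 ++ mkD m g) = j * j + 3 * j + sumn g + sumn B).
rewrite /mkS /mkD !sumn_cat !sumn_mapD !sum_count sumn_nseq.
have -> : sumn [seq j.+1 | _ <- iota 3 (j - 3)] = j.+1 * (j - 3).
  by rewrite sumn_const size_iota mulnC.
have -> : sumn [seq 2 | _ <- iota 0 (m - 2)] = 2 * (m - 2).
  by rewrite sumn_const size_iota mulnC.
have -> : [seq minn (x - 3) (j - 3) | x <- B] = [seq x - 3 | x <- B].
  by apply/eq_in_map => x /(allP HBb) /= H; lia.
have -> : [seq minn (x - 0) (m - 2) | x <- g] = g.
  by rewrite -[RHS]map_id; apply/eq_in_map => x /(allP Hgb) /= H; lia.
have HB3 : all (fun x => 3 <= x) B by apply/allP => x /(allP HBb) /andP [].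
have := sumn_sub HB3; rewrite HB.
have -> : j * j = (j - 3) * (j - 3) + 6 * (j - 3) + 9 by nia.
move=> H; lia.
Qed.

Lemma durfee_mk : durfee (mk j m g B) = j.+1.
Proof.
apply: durfee_eq; first exact: sorted_mk.
- by rewrite /part nth_mk_mid //; lia.
- by rewrite /part nth_mk_mid //; lia.
Qed.

Lemma mk_Pbar1 : mk j m g B \in Pbar1 (j * j + 3 * j + sumn g + sumn B).
Proof.
have Hall := all_mk.
have Hpos : all (fun x => 0 < x) (mk j m g B).
  by apply/allP => x /(allP Hall) /=; lia.
have Hn0 : nth 0 (mk j m g B) 0 = j + m by [].
rewrite unfold_in /Pbar1 durfee_mk /is_partition sorted_mk sum_mk eqxx Hpos.
rewrite /rank_nonneg size_mk /part Hn0 leqnn /=.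
rewrite /dalpha /dbeta /conj_part durfee_mk.
set e := [seq part (mk j m g B) i - j.+1 | i <- iota 1 j.+1].
have He : foldr maxn 0 e = m - 1.
  apply/eqP; rewrite eqn_leq; apply/andP; split.
    apply: foldr_max_le; apply/allP => x /mapP [i Hi ->].
    move: Hi; rewrite mem_iota => /andP [Hi1 _].
    have := part_mono sorted_mk Hi1; rewrite {2}/part Hn0; lia.
  have -> : m - 1 = part (mk j m g B) 1 - j.+1 by rewrite /part Hn0; lia.
  by apply: foldr_max_ge; apply/mapP; exists 1; rewrite // mem_iota; lia.
rewrite size_mkseq He size_drop size_mk.
rewrite nth_mkseq; last lia.
rewrite nth_drop addn0 nth_mk_mid; last lia.
apply/and4P; split.
- by apply/eqP; lia.
- rewrite /e; have -> : iota 1 j.+1 = iota 1 (j - 2) ++ iota (j - 1) 3.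
    have -> : j - 1 = 1 + (j - 2) by lia.
    by rewrite -iotaD; congr iota; lia.
  rewrite map_cat count_cat.
  have -> : count (fun x => 0 < x) [seq part (mk j m g B) i - j.+1 | i <- iota (j - 1) 3] = 0.
    rewrite /= /part !nth_mk_mid ?subnn //; lia.
  have := count_size (fun x => 0 < x) [seq part (mk j m g B) i - j.+1 | i <- iota 1 (j - 2)].
  rewrite size_map size_iota; lia.
- by [].
- apply/allP => x /mem_drop /(allP Hall) //.
Qed.

End MK.

Lemma Q_facts n l : l \in Qbar1 n ->
  sorted geq l /\ sumn l = n /\ 3 <= durfee l /\
      (forall i, 1 <= i <= durfee l -> (durfee l).+2 <= part l i) /\
      part l (durfee l) = (durfee l).+2 /\ part l (durfee l).+1 = durfee l /\
      all (fun x => 3 <= x) (drop (durfee l) l) /\ part l 1 < size l.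
Proof.
move=> Hl; move: Hl; rewrite unfold_in; cbv zeta.
rewrite /Qbar1 /is_partition.
set j := durfee l.
rewrite /dalpha /dbeta -/j.
set e := [seq part l i - j | i <- iota 1 j].
case/and5P => /and3P [Hs Hpos /eqP Hsum] Hj /eqP Hb1 Hsz /and4P [_ Ha2 Ha3 Hsm].
have Hb1' : part l j.+1 = j by move: Hb1; rewrite /part /= nth_drop addn0.
rewrite /conj_part size_mkseq size_drop in Hsz.
have Hsa : 1 < foldr maxn 0 e.
  case: (ltnP 1 (foldr maxn 0 e)) => // H.
  move: Ha2; rewrite /part /= nth_default ?size_mkseq //; lia.
move: Ha2; rewrite /part /= nth_mkseq // => Ha2.
have Hall : all (fun x => 1 < x) e.
  by rewrite all_count size_map size_iota.
have Hge : forall i, 1 <= i <= j -> j.+2 <= part l i.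
  move=> i Hi; have : part l i - j \in e by apply/mapP; exists i => //; rewrite mem_iota; lia.
  move/(allP Hall) => /=; lia.
have Hlj : part l j = j.+2.
  have := Hge j; rewrite leqnn Hj => /(_ isT) H1.
  case: (ltnP (part l j) j.+3) => H2; first lia.
  have Hall3 : all (fun x => 2 < x) e.
    apply/allP => x /mapP [i]; rewrite mem_iota => Hi ->.
    have := part_mono Hs (_ : i <= j); lia.
  have He3 : 2 < foldr maxn 0 e.
    apply: (@leq_trans (part l j - j)); first lia.
    by apply: foldr_max_ge; apply/mapP; exists j => //; rewrite mem_iota; lia.
  move: Ha3; rewrite /part /= nth_mkseq //.
  move: Hall3; rewrite all_count size_map size_iota => /eqP ->; lia.
have Hmax : part l 1 - j <= foldr maxn 0 e.
  by apply: foldr_max_ge; apply/mapP; exists 1 => //; rewrite mem_iota; lia.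
have Hl1 := Hge 1; rewrite Hj in Hl1.
have Hszl : j < size l by lia.
have H3 : 3 <= j.
  move: Hsm; rewrite /smallest_ge (drop_nth 0 Hszl) /= => /andP [H _].
  by move: Hb1'; rewrite /part /= => <-.
rewrite /part /= in Hge Hlj Hb1' Hl1 Hmax.
do 7 (split => //); lia.
Qed.

Definition gof l := [seq part l i - (durfee l).+2 | i <- iota 1 (durfee l).-1].
Definition fmap l := mk (durfee l) (size l - durfee l) (gof l) (drop (durfee l).+1 l).

Lemma src n l : l \in Qbar1 n ->
  let j := durfee l in let m := size l - j in
  [/\ 3 <= j, 3 <= m, size (gof l) = j.-1, all (fun x => x <= m - 3) (gof l) &
      [/\ sorted geq (gof l), size (drop j.+1 l) = m.-1,
          all (fun x => 3 <= x <= j) (drop j.+1 l), sorted geq (drop j.+1 l) &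
          (l = [seq x + j.+2 | x <- gof l] ++ j.+2 :: j :: drop j.+1 l /\ sumn l = n)]].
Proof.
move=> /Q_facts [Hs [Hsum [Hj [Hge [Hlj [Hlj1 [H3 Hl1]]]]]]] j m.
have Hszl : j < size l by move: Hl1 (Hge 1); rewrite -/j; lia.
have Hm : 3 <= m by move: Hl1 (Hge 1); rewrite /m -/j; lia.
have Hsz : size (gof l) = j.-1 by rewrite size_map size_iota.
have Hnth : forall i, i < j.-1 -> nth 0 (gof l) i = part l i.+1 - j.+2.
  by move=> i Hi; rewrite (nth_map 0) ?size_iota // nth_iota.
have Hdec : l = [seq x + j.+2 | x <- gof l] ++ j.+2 :: j :: drop j.+1 l.
  apply: (@eq_from_nth _ 0).
    by rewrite size_cat size_map /= size_drop Hsz; lia.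
  move=> i Hi; rewrite nth_cat size_map Hsz.
  case: ltnP => Hij.
    rewrite (nth_map 0) ?Hsz // Hnth // subnK //; last by apply: Hge; lia.
  case E : (i - j.-1) => [|[|k]] /=.
  - by have -> : i = j.-1 by lia; move: Hlj; rewrite /part.
  - by have -> : i = j by lia.
  - by rewrite nth_drop; congr nth; lia.
have Hdj : drop j l = j :: drop j.+1 l.
  by rewrite (drop_nth 0 Hszl); move: Hlj1; rewrite /part /= => ->.
have HsB : sorted geq (j :: drop j.+1 l) by rewrite -Hdj; exact: drop_sorted.
split => //.
- apply/allP => x /mapP [i]; rewrite mem_iota => Hi ->.
  have := part_mono Hs (_ : 1 <= i); move: Hl1; rewrite /m; lia.
split => //.
- apply: (homo_sorted (e := leq)); last exact: iota_sorted.
  move=> x y H /=; have := part_mono Hs H; lia.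
- by rewrite size_drop /m; lia.
- apply/allP => x Hx; rewrite (allP H3) /=; last by rewrite Hdj in_cons Hx orbT.
  move: HsB; rewrite /= path_sortedE; last exact: geq_trans.
  by case/andP => /allP /(_ x Hx).
- by move: HsB; rewrite /= => /path_sorted.
Qed.

Lemma sumn_addc c s : sumn [seq x + c | x <- s] = sumn s + size s * c.
Proof. by rewrite sumn_mapD map_id sumn_const. Qed.

Theorem lemma5p1 (n : nat) (hn : 1 <= n) :
  exists f : seq nat -> seq nat,
    {in Qbar1 n, forall l, f l \in Pbar1 n} /\ {in Qbar1 n &, injective f}.
Proof.
exists fmap; split.
  move=> l Hl; have [Hj Hm Hsz Hgb [Hgs HB HBb HBs [Hdec Hsum]]] := src Hl.
  have := mk_Pbar1 Hj Hm Hsz Hgb HB HBb.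
  suff -> : n = durfee l * durfee l + 3 * durfee l + sumn (gof l) + sumn (drop (durfee l).+1 l) by [].
  rewrite -Hsum {1}Hdec sumn_cat sumn_addc Hsz /=.
  move: (durfee l) Hj => j Hj.
  have -> : j = (j - 3) + 3 by lia.
  set k := j - 3. have -> : (k + 3).-1 = k + 2 by lia.
  nia.
move=> l1 l2 H1 H2 E.
have [Hj1 Hm1 Hsz1 Hgb1 [Hgs1 HB1 HBb1 HBs1 [Hdec1 _]]] := src H1.
have [Hj2 Hm2 Hsz2 Hgb2 [Hgs2 HB2 HBb2 HBs2 [Hdec2 _]]] := src H2.
have Ej : durfee l1 = durfee l2.
  have := congr1 durfee E; rewrite /fmap (durfee_mk Hj1 Hm1 Hsz1 Hgb1 HB1 HBb1).
  by rewrite (durfee_mk Hj2 Hm2 Hsz2 Hgb2 HB2 HBb2) => -[].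
move: E Hdec1 Hdec2 Hj1 Hm1 Hsz1 Hgb1 HB1 HBb1 Hgs1 HBs1 Hm2 Hsz2 Hgb2 HB2 HBb2 Hgs2 HBs2.
rewrite /fmap -Ej.
set j := durfee l1; set m1 := size l1 - j; set m2 := size l2 - j.
set g1 := gof l1; set g2 := gof l2; set B1 := drop j.+1 l1; set B2 := drop j.+1 l2.
move=> E Hdec1 Hdec2 Hj Hm1 Hsz1 Hgb1 HB1 HBb1 Hgs1 HBs1 Hm2 Hsz2 Hgb2 HB2 HBb2 Hgs2 HBs2.
case: E => Em E.
have Em' : m1 = m2 by lia.
rewrite -Em' in E Hgb2 HB2.
move/eqP: E; rewrite eqseq_cat; last by rewrite /mkS !size_map.
case/andP => /eqP ES; rewrite !eqseq_cons eqxx /= => /eqP ED.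
have EB : B1 = B2.
  apply: sorted_count_eq => //; first by rewrite HB1 HB2.
  move=> t; case: (ltnP t 3) => Ht.
    rewrite (@eq_in_count _ _ predT B1); last first.
      by move=> x /(allP HBb1) /=; lia.
    rewrite (@eq_in_count _ _ predT B2); last first.
      by move=> x /(allP HBb2) /=; lia.
    by rewrite !count_predT HB1 HB2.
  case: (ltnP t j) => Htj.
    move/eq_in_map: ES => /(_ t); rewrite mem_iota => /(_ _)/eqP.
    rewrite eqn_add2l => H; apply/eqP; apply: H; lia.
  rewrite (@eq_in_count _ _ pred0 B1); last first.
    by move=> x /(allP HBb1) /=; lia.
  rewrite (@eq_in_count _ _ pred0 B2); last first.
    by move=> x /(allP HBb2) /=; lia.
  by rewrite !count_pred0.
have Eg : g1 = g2.
  apply: sorted_count_eq => //; first by rewrite Hsz1 Hsz2.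
  move=> t; case: (ltnP t (m1 - 2)) => Ht.
    move/eq_in_map: ED => /(_ t); rewrite mem_iota => /(_ _)/eqP.
    rewrite eqn_add2l => H; apply/eqP; apply: H; lia.
  rewrite (@eq_in_count _ _ pred0 g1); last first.
    by move=> x /(allP Hgb1) /=; lia.
  rewrite (@eq_in_count _ _ pred0 g2); last first.
    by move=> x /(allP Hgb2) /=; lia.
  by rewrite !count_pred0.
by rewrite Hdec1 Hdec2 EB Eg.
Qed.
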